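(* Let $0<\eta<1$, $I=[\eta,1]$, and $\mathcal{D}$ as in the context. For every $s\in(0,1)$ and every $k\ge0$, the function $x\mapsto (x^s+k)^{-1}$ on $I$ belongs to $\mathscr{L}_1(\mathcal{D})$.
   Context: Dictionary: for $b\in(0,\infty)$ let $g(x,b)=\frac{\eta+b}{x+b}$ on $I$, and $\mathcal{D}=\{g(\cdot,b):b\in(0,\infty)\}\subset L^\infty(I)$. $B_1(\mathcal{D})$ is the closure in $L^\infty(I)$ of $\{\sum_{j=1}^m c_jg_j: m\in\mathbb{N}, g_j\in\mathcal{D}, \sum_j|c_j|\le1\}$; $\|f\|_{\mathscr{L}_1(\mathcal{D})}=\inf\{c>0: f\in cB_1(\mathcal{D})\}$; $\mathscr{L}_1(\mathcal{D})=\{f:\|f\|_{\mathscr{L}_1(\mathcal{D})}<\infty\}$. *)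

(* Defs.v *)
From Stdlib Require Import Reals List.
Open Scope R_scope.

Definition dict (eta b x : R) : R := (eta + b) / (x + b).

Definition comb (eta : R) (l : list (R * R)) (x : R) : R :=
  fold_right (fun p acc => fst p * dict eta (snd p) x + acc) 0 l.

Definition coef_l1 (l : list (R * R)) : R :=
  fold_right (fun p acc => Rabs (fst p) + acc) 0 l.

(* all b_j lie in (0, oo), i.e. each g(., b_j) is in the dictionary D *)
Definition params_pos (l : list (R * R)) : Prop :=
  forall p, In p l -> 0 < snd p.

(* f belongs to c * B_1(D), where B_1(D) is the closure in the sup norm on
   I = [eta,1] (= L^oo(I) norm for these continuous functions) of the
   absolutely convex combinations of dictionary elements.  For c > 0,
   c * conv = combinations with sum |c_j| <= c. *)
Definition in_scaled_B1 (eta c : R) (f : R -> R) : Prop :=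
  forall eps, 0 < eps ->
    exists l : list (R * R),
      params_pos l /\ coef_l1 l <= c /\
      forall x, eta <= x <= 1 -> Rabs (f x - comb eta l x) <= eps.

(* f in script-L_1(D): the L_1(D) norm inf{c > 0 : f in c B_1(D)} is finite,
   i.e. the set is nonempty. *)
Definition in_L1D (eta : R) (f : R -> R) : Prop :=
  exists c, 0 < c /\ in_scaled_B1 eta c f.

(* Main.v *)
Require Import Defs.
From Stdlib Require Import Reals Lra Lia List.
From Coquelicot Require Import Coquelicot.
Open Scope R_scope.

Section Geo.
Variables (s q : R).
Hypotheses (hs : 0 < s < 1) (hq : 1 < q).
Let qs := Rpower q s.

Lemma qs_gt1 : 1 < qs.
Proof. unfold qs; rewrite <- (Rpower_O q) by lra; apply Rpower_lt; lra. Qed.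
Lemma qs_ltq : qs < q.
Proof. unfold qs; rewrite <- (Rpower_1 q) at 2 by lra; apply Rpower_lt; lra. Qed.

Definition Aq n x := qs ^ n * x / (x + q ^ n).
Definition Bq n x := (/ qs) ^ (S n) * x / (x + (/ q) ^ (S n)).
Definition Cq n x := Aq n x + Bq n x.

Lemma qpow_pos n : 0 < q ^ n.
Proof. apply pow_lt; lra. Qed.
Lemma iqpow_pos n : 0 < (/ q) ^ n.
Proof. apply pow_lt; apply Rinv_0_lt_compat; lra. Qed.
Lemma qspow_pos n : 0 < qs ^ n.
Proof. apply pow_lt; generalize qs_gt1; lra. Qed.
Lemma iqspow_pos n : 0 < (/ qs) ^ n.
Proof. apply pow_lt; apply Rinv_0_lt_compat; generalize qs_gt1; lra. Qed.

Lemma frac_mono c x y : 0 < c -> 0 <= x <= y -> x / (x + c) <= y / (y + c).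
Proof.
intros hc hxy. unfold Rdiv.
apply Rmult_le_reg_r with ((x + c) * (y + c)); [nra|].
field_simplify; try lra. nra.
Qed.

Lemma frac_le1 c x : 0 < c -> 0 <= x -> x / (x + c) <= 1.
Proof. intros. apply Rmult_le_reg_r with (x + c); [lra|]. field_simplify; lra. Qed.
Lemma frac_ge0 c x : 0 < c -> 0 <= x -> 0 <= x / (x + c).
Proof. intros. apply Rdiv_le_0_compat; lra. Qed.

Lemma Aq_ge0 n x : 0 <= x -> 0 <= Aq n x.
Proof.
intros. unfold Aq. unfold Rdiv. rewrite Rmult_assoc.
apply Rmult_le_pos; [generalize (qspow_pos n); lra|].
apply frac_ge0; auto. apply qpow_pos.
Qed.
Lemma Bq_ge0 n x : 0 <= x -> 0 <= Bq n x.
Proof.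
intros. unfold Bq. unfold Rdiv. rewrite Rmult_assoc.
apply Rmult_le_pos; [generalize (iqspow_pos (S n)); lra|].
apply frac_ge0; auto. apply iqpow_pos.
Qed.
Lemma Cq_ge0 n x : 0 <= x -> 0 <= Cq n x.
Proof. intros; unfold Cq; generalize (Aq_ge0 n x H) (Bq_ge0 n x H); lra. Qed.

Lemma Cq_mono n x y : 0 <= x <= y -> Cq n x <= Cq n y.
Proof.
intros. unfold Cq, Aq, Bq. unfold Rdiv. rewrite !(Rmult_assoc _ _ (/ _)).
apply Rplus_le_compat; apply Rmult_le_compat_l;
  try (generalize (qspow_pos n) (iqspow_pos (S n)); lra);
  apply frac_mono; auto; [apply qpow_pos | apply iqpow_pos].
Qed.

Lemma Aq_bound n x : 0 <= x -> Aq n x <= x * (qs / q) ^ n.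
Proof.
intros. unfold Aq. unfold Rdiv. rewrite Rpow_mult_distr, pow_inv.
generalize (qpow_pos n) (qspow_pos n); intros.
apply Rmult_le_reg_r with (q ^ n * (x + q ^ n)); [nra|].
field_simplify; try lra. nra.
Qed.
Lemma Bq_bound n x : 0 <= x -> Bq n x <= (/ qs) ^ (S n).
Proof.
intros. unfold Bq. unfold Rdiv. rewrite Rmult_assoc.
rewrite <- (Rmult_1_r ((/ qs) ^ (S n))) at 2.
apply Rmult_le_compat_l; [generalize (iqspow_pos (S n)); lra|].
apply frac_le1; auto. apply iqpow_pos.
Qed.

Lemma ex_Cq x : 0 <= x -> ex_series (fun n => Cq n x).
Proof.
intros hx.
apply (@ex_series_le R_AbsRing R_CompleteNormedModule) with (fun n => x * (qs / q) ^ n + / qs * (/ qs) ^ n).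
- intros n. rewrite Rabs_pos_eq by (apply Cq_ge0; auto).
  unfold Cq. generalize (Aq_bound n x hx) (Bq_bound n x hx). simpl. lra.
- apply (ex_series_plus (fun n => x * (qs / q) ^ n) (fun n => / qs * (/ qs) ^ n)).
  + apply (ex_series_scal x (fun n => (qs / q) ^ n)). apply ex_series_geom.
    generalize qs_gt1 qs_ltq; intros.
    rewrite Rabs_pos_eq. apply Rmult_lt_reg_r with q; [lra|]. field_simplify; lra.
    apply Rdiv_le_0_compat; lra.
  + apply (ex_series_scal (/ qs) (fun n => (/ qs) ^ n)). apply ex_series_geom.
    generalize qs_gt1; intros.
    rewrite Rabs_pos_eq. rewrite <- Rinv_1. apply Rinv_lt_contravar; lra.
    apply Rlt_le, Rinv_0_lt_compat; lra.
Qed.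


Lemma ex_Aq x : 0 <= x -> ex_series (fun n => Aq n x).
Proof.
intros hx. apply (@ex_series_le R_AbsRing R_CompleteNormedModule) with (fun n => Cq n x).
- intros n. rewrite Rabs_pos_eq by (apply Aq_ge0; auto). unfold Cq. generalize (Bq_ge0 n x hx). simpl; lra.
- apply ex_Cq; auto.
Qed.
Lemma ex_Bq x : 0 <= x -> ex_series (fun n => Bq n x).
Proof.
intros hx. apply (@ex_series_le R_AbsRing R_CompleteNormedModule) with (fun n => Cq n x).
- intros n. rewrite Rabs_pos_eq by (apply Bq_ge0; auto). unfold Cq. generalize (Aq_ge0 n x hx). simpl; lra.
- apply ex_Cq; auto.
Qed.

Definition Sq x := Series (fun n => Cq n x).

Lemma Sq_split x : 0 <= x -> Sq x = Series (fun n => Aq n x) + Series (fun n => Bq n x).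
Proof. intros. unfold Sq, Cq. apply Series_plus; [apply ex_Aq|apply ex_Bq]; auto. Qed.

Lemma Sq_scale x : 0 <= x -> Sq (q * x) = qs * Sq x.
Proof.
intros hx. assert (hqx : 0 <= q * x) by nra.
generalize qs_gt1; intro hqs.
rewrite (Sq_split _ hqx), (Sq_split _ hx).
rewrite (Series_incr_1 (fun n => Aq n (q * x))) by (apply ex_Aq; auto).
rewrite (Series_incr_1 (fun n => Bq n x)) by (apply ex_Bq; auto).
rewrite (Series_ext (fun k => Aq (S k) (q * x)) (fun k => qs * Aq k x)).
2:{ intros k. unfold Aq. simpl. generalize (qpow_pos k); intro. field. repeat split; try lra; nra. }
rewrite (Series_ext (fun k => Bq k (q * x)) (fun k => qs * Bq (S k) x)).
2:{ intros k. unfold Bq. cbn [pow]. generalize (iqpow_pos k); intro.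
    set (u := (/ q) ^ k) in *. set (w := (/ qs) ^ k).
    assert (q * x + / q * u = q * (x + / q * (/ q * u))) by (field; lra).
    assert (0 < x + / q * (/ q * u)).
    { assert (0 < / q) by (apply Rinv_0_lt_compat; lra). nra. }
    rewrite H0. field. repeat split; try lra. nra. }
rewrite !Series_scal_l.
replace (Aq 0 (q * x)) with (qs * Bq 0 x).
2:{ unfold Aq, Bq. simpl. field. repeat split; try lra. }
ring.
Qed.

Lemma Sq_mono x y : 0 <= x <= y -> Sq x <= Sq y.
Proof.
intros. unfold Sq. apply Series_le.
- intros n; split; [apply Cq_ge0; lra | apply Cq_mono; auto].
- apply ex_Cq; lra.
Qed.

Lemma Sq_ge0 x : 0 <= x -> 0 <= Sq x.
Proof.
intros. unfold Sq. replace 0 with (Series (fun n => 0 * Cq n x)) by (rewrite Series_scal_l; ring).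
apply Series_le. intros; rewrite Rmult_0_l; split; [lra| apply Cq_ge0; auto]. apply ex_Cq; auto.
Qed.


Lemma Rp_pos x : 0 < Rpower x s.
Proof. unfold Rpower; apply exp_pos. Qed.
Lemma Rp_mul x : 0 < x -> Rpower (q * x) s = qs * Rpower x s.
Proof. intros; unfold qs; rewrite Rpower_mult_distr; auto; lra. Qed.
Lemma Rp_inv : Rpower (/ q) s = / qs.
Proof.
unfold qs, Rpower. rewrite ln_Rinv by lra. rewrite <- exp_Ropp. f_equal; ring.
Qed.
Lemma Rp_mono x y : 0 < x <= y -> Rpower x s <= Rpower y s.
Proof. intros; apply Rle_Rpower_l; lra. Qed.
Lemma Rp_one : Rpower 1 s = 1.
Proof. unfold Rpower; rewrite ln_1, Rmult_0_r; apply exp_0. Qed.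

Lemma Sq_iq : Sq (/ q) = / qs * Sq 1.
Proof.
generalize qs_gt1; intro.
assert (h := Sq_scale (/ q) ltac:(apply Rlt_le, Rinv_0_lt_compat; lra)).
rewrite Rinv_r in h by lra. rewrite h. field. lra.
Qed.

Lemma Sq_base x : / q < x <= 1 ->
  / qs * Sq 1 * Rpower x s <= Sq x <= qs * Sq 1 * Rpower x s.
Proof.
intros hx. generalize qs_gt1; intro hqs.
assert (hiq : 0 < / q) by (apply Rinv_0_lt_compat; lra).
assert (S1 : 0 <= Sq 1) by (apply Sq_ge0; lra).
assert (e1 : Rpower x s <= 1) by (rewrite <- Rp_one; apply Rp_mono; lra).
assert (e2 : / qs <= Rpower x s) by (rewrite <- Rp_inv; apply Rp_mono; lra).
assert (hxs := Rp_pos x).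
split.
- apply Rle_trans with (Sq (/ q)); [|apply Sq_mono; lra].
  rewrite Sq_iq. assert (0 < / qs) by (apply Rinv_0_lt_compat; lra). assert (0 <= / qs * Sq 1) by nra. nra.
- apply Rle_trans with (Sq 1); [apply Sq_mono; lra|].
  assert (1 <= qs * Rpower x s).
  { apply Rmult_le_reg_l with (/ qs). apply Rinv_0_lt_compat; lra.
    rewrite <- Rmult_assoc, Rinv_l, Rmult_1_l, Rmult_1_r by lra. lra. }
  nra.
Qed.

Lemma Sq_bounds n : forall x, (/ q) ^ (S n) < x <= 1 ->
  / qs * Sq 1 * Rpower x s <= Sq x <= qs * Sq 1 * Rpower x s.
Proof.
generalize qs_gt1; intro hqs.
induction n as [|n IH]; intros x hx.
- simpl in hx. rewrite Rmult_1_r in hx. apply Sq_base; auto.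
- destruct (Rlt_le_dec (/ q) x) as [h|h]; [apply Sq_base; lra|].
  assert (hxpos : 0 < x) by (generalize (iqpow_pos (S (S n))); lra).
  assert (hy : (/ q) ^ S n < q * x <= 1).
  { split.
    - replace ((/ q) ^ S n) with (q * (/ q) ^ S (S n)).
      + apply Rmult_lt_compat_l; lra.
      + simpl. field. lra.
    - apply Rmult_le_reg_l with (/ q). apply Rinv_0_lt_compat; lra.
      rewrite <- Rmult_assoc, Rinv_l, Rmult_1_l, Rmult_1_r by lra. lra. }
  specialize (IH _ hy). rewrite Sq_scale, Rp_mul in IH by lra.
  assert (0 < qs) by lra.
  split.
  + apply Rmult_le_reg_l with qs; auto. destruct IH. nra.
  + apply Rmult_le_reg_l with qs; auto. destruct IH. nra.
Qed.

Definition Fq N x := sum_f_R0 (fun n => Cq n x) N.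

Lemma tail_bound N x : 0 <= x <= 1 -> 0 <= Sq x - Fq N x <= Sq 1 - Fq N 1.
Proof.
intros hx. unfold Sq, Fq.
rewrite (Series_incr_n (fun n => Cq n x) (S N)), (Series_incr_n (fun n => Cq n 1) (S N))
  by (try lia; apply ex_Cq; lra).
simpl pred.
match goal with |- 0 <= ?a + ?b - ?a <= ?c + ?d - ?c => replace (a + b - a) with b by ring; replace (c + d - c) with d by ring end.
split.
- replace 0 with (Series (fun k => 0 * Cq (S N + k) x)) by (rewrite Series_scal_l; ring).
  apply Series_le. intros; rewrite Rmult_0_l; split; [lra|apply Cq_ge0; lra].
  apply (ex_series_incr_n (fun n => Cq n x) (S N)). apply ex_Cq; lra.
- apply Series_le. intros; split; [apply Cq_ge0; lra|apply Cq_mono; lra].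
  apply (ex_series_incr_n (fun n => Cq n 1) (S N)). apply ex_Cq; lra.
Qed.

Lemma F_conv eps : 0 < eps -> exists N, Sq 1 - Fq N 1 < eps.
Proof.
intros he.
assert (h := Series_correct _ (ex_Cq 1 ltac:(lra))).
apply is_series_Reals in h. destruct (h eps he) as [N HN].
exists N. specialize (HN N (le_n N)). unfold R_dist in HN. unfold Fq, Sq.
apply Rabs_def2 in HN. lra.
Qed.

Lemma Cq_pos0 : 0 < Cq 0 1.
Proof.
unfold Cq, Aq. simpl. generalize (Bq_ge0 0 1 ltac:(lra)). intro. 
assert (0 < 1 * 1 / (1 + 1)) by lra. lra.
Qed.

Lemma Sq1_pos : 0 < Sq 1.
Proof.
generalize (tail_bound 0 1 ltac:(lra)) Cq_pos0. unfold Fq. simpl. lra.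
Qed.

End Geo.

Lemma approx_xs (s eta eps : R) : 0 < s < 1 -> 0 < eta <= 1 -> 0 < eps ->
  exists q N, 1 < q /\ 0 < Sq s q 1 /\
    forall x, eta <= x <= 1 -> Rabs (Fq s q N x / Sq s q 1 - Rpower x s) <= eps.
Proof.
intros hs heta he.
set (e := eps / 2).
set (q := Rpower (1 + e) (/ s)).
assert (he2 : 0 < e) by (unfold e; lra).
assert (hq : 1 < q).
{ unfold q. apply Rle_lt_trans with (Rpower (1 + e) 0); [rewrite Rpower_O; lra|].
  apply Rpower_lt; try lra.
  apply Rinv_0_lt_compat; lra. }
assert (hqs : Rpower q s = 1 + e).
{ unfold q. rewrite Rpower_mult, Rinv_l, Rpower_1; lra. }
exists q.
set (S1 := Sq s q 1).
assert (hS1 : 0 < S1) by (apply Sq1_pos; auto).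
destruct (F_conv s q hs hq (S1 * e) ltac:(nra)) as [N HN].
exists N. split; [auto|split; [auto|]].
assert (hiq : Rabs (/ q) < 1).
{ rewrite Rabs_pos_eq. rewrite <- Rinv_1. apply Rinv_lt_contravar; lra.
  apply Rlt_le, Rinv_0_lt_compat; lra. }
destruct (pow_lt_1_zero (/ q) hiq eta ltac:(lra)) as [N0 HN0].
intros x hx.
assert (hpow : (/ q) ^ S N0 < x).
{ specialize (HN0 (S N0) ltac:(lia)). rewrite Rabs_pos_eq in HN0. lra.
  apply pow_le. apply Rlt_le, Rinv_0_lt_compat; lra. }
destruct (Sq_bounds s q hs hq N0 x ltac:(lra)) as [lo hi].
rewrite hqs in lo, hi. fold S1 in lo, hi.
destruct (tail_bound s q hs hq N x ltac:(lra)) as [t1 t2].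
fold S1 in t1, t2, HN.
assert (hxs : 0 < Rpower x s) by (unfold Rpower; apply exp_pos).
assert (hxs1 : Rpower x s <= 1).
{ replace 1 with (Rpower 1 s) by (unfold Rpower; rewrite ln_1, Rmult_0_r; apply exp_0).
  apply Rle_Rpower_l; lra. }
set (y := Rpower x s) in *. set (F := Fq s q N x) in *. set (Sx := Sq s q x) in *.
assert (hinv : / (1 + e) >= 1 - e).
{ apply Rle_ge. apply Rmult_le_reg_l with (1 + e); [lra|].
  rewrite Rinv_r by lra. nra. }
assert (0 < / (1 + e)) by (apply Rinv_0_lt_compat; lra).
assert (0 < e * S1) by nra. assert (e * S1 * y <= e * S1) by nra.
assert (S1 * y > 0) by nra.
assert (up : F / S1 <= y + e).
{ apply Rmult_le_reg_l with S1; auto. field_simplify; [|lra]. nra. }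
assert (down : y - e - e <= F / S1).
{ apply Rmult_le_reg_l with S1; auto. field_simplify; [|lra].
  assert ((1 - e) * (S1 * y) <= / (1 + e) * (S1 * y)) by (apply Rmult_le_compat_r; lra).
  lra. }
apply Rabs_le. unfold e in *. lra.
Qed.


Fixpoint sumR (m : nat) (f : nat -> R) : R :=
  match m with O => 0 | S m' => sumR m' f + f m' end.

Lemma sumR_ext m f g : (forall j, (j < m)%nat -> f j = g j) -> sumR m f = sumR m g.
Proof. induction m; simpl; intros H; auto. rewrite IHm, H; auto. Qed.
Lemma sumR_plus m f g : sumR m (fun j => f j + g j) = sumR m f + sumR m g.
Proof. induction m; simpl; [ring|]. rewrite IHm; ring. Qed.
Lemma sumR_scal m c f : sumR m (fun j => c * f j) = c * sumR m f.
Proof. induction m; simpl; [ring|]. rewrite IHm; ring. Qed.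
Lemma sumR_split M M' g : sumR (M + M') g = sumR M g + sumR M' (fun n => g (M + n)%nat).
Proof.
induction M'; simpl. rewrite Nat.add_0_r; ring.
rewrite Nat.add_succ_r. simpl. rewrite IHM'. ring.
Qed.
Lemma sumR_shift M h : sumR (S M) h = h 0%nat + sumR M (fun n => h (S n)).
Proof. induction M; simpl in *. ring. rewrite IHM. ring. Qed.
Lemma sumR_rev M g : sumR M g = sumR M (fun n => g (M - 1 - n)%nat).
Proof.
induction M; [reflexivity|].
rewrite (sumR_shift M (fun n => g (S M - 1 - n)%nat)).
change (sumR (S M) g) with (sumR M g + g M). rewrite IHM.
replace (S M - 1 - 0)%nat with M by lia. rewrite Rplus_comm. f_equal.
apply sumR_ext; intros j hj. f_equal. lia.
Qed.
Lemma sum_f_sumR N f : sum_f_R0 f N = sumR (S N) f.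
Proof. induction N; simpl; [ring|]. rewrite IHN. reflexivity. Qed.
Lemma sumR_ge0 m f : (forall j, (j < m)%nat -> 0 <= f j) -> 0 <= sumR m f.
Proof. induction m; simpl; intros H; [lra|]. assert (0 <= f m) by auto. assert (0 <= sumR m f) by auto. lra. Qed.

Definition PF_stmt := forall (m : nat) (t a : nat -> R) (K : R),
  0 < t 0%nat -> (forall i j, (i < j)%nat -> t i < t j) -> (forall i, 0 < a i) ->
  sumR m (fun j => a j / t j) < K ->
  exists l : list (R * R), (forall p, In p l -> 0 <= fst p /\ 0 < snd p) /\
    forall x, 0 <= x ->
      / (K - sumR m (fun j => a j / (x + t j))) =
      / K + fold_right (fun p acc => fst p / (x + snd p) + acc) 0 l.

Definition rescale (eta : R) (l : list (R * R)) :=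
  map (fun p => (fst p / (eta + snd p), snd p)) l.

Lemma comb_rescale eta l x : 0 < eta -> 0 <= x -> (forall p, In p l -> 0 <= fst p /\ 0 < snd p) ->
  comb eta (rescale eta l) x = fold_right (fun p acc => fst p / (x + snd p) + acc) 0 l.
Proof.
intros he hx; induction l as [|p l IH]; intros H; simpl; [reflexivity|].
rewrite IH by (intros; apply H; right; auto).
destruct (H p (or_introl eq_refl)) as [_ hp].
unfold dict. f_equal. field. split; lra.
Qed.

Lemma l1_rescale eta l : 0 < eta -> (forall p, In p l -> 0 <= fst p /\ 0 < snd p) ->
  coef_l1 (rescale eta l) = fold_right (fun p acc => fst p / (eta + snd p) + acc) 0 l.
Proof.
intros he; induction l as [|p l IH]; intros H; simpl; [reflexivity|].
rewrite IH by (intros; apply H; right; auto).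
destruct (H p (or_introl eq_refl)) as [h1 hp].
rewrite Rabs_pos_eq; [reflexivity|]. apply Rdiv_le_0_compat; lra.
Qed.

Lemma params_rescale eta l : (forall p, In p l -> 0 <= fst p /\ 0 < snd p) ->
  params_pos (rescale eta l).
Proof.
intros H p hp. unfold rescale in hp. apply in_map_iff in hp.
destruct hp as [p' [<- hp']]. simpl. apply H; auto.
Qed.

Lemma fold_ge0 x l : 0 <= x -> (forall p, In p l -> 0 <= fst p /\ 0 < snd p) ->
  0 <= fold_right (fun p acc => fst p / (x + snd p) + acc) 0 l.
Proof.
intros hx; induction l as [|p l IH]; intros H; simpl; [lra|].
assert (0 <= fold_right (fun p acc => fst p / (x + snd p) + acc) 0 l)
  by (apply IH; intros; apply H; right; auto).
destruct (H p (or_introl eq_refl)) as [h1 hp].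
assert (0 <= fst p / (x + snd p)) by (apply Rdiv_le_0_compat; lra). lra.
Qed.

Lemma pow_inv_lt q i j : 1 < q -> (i < j)%nat -> (/ q) ^ j < (/ q) ^ i.
Proof.
intros hq hij. rewrite !pow_inv. apply Rinv_lt_contravar.
apply Rmult_lt_0_compat; apply pow_lt; lra. apply Rlt_pow; auto.
Qed.

Lemma main_from_PF (PF : PF_stmt) (eta s k : R) :
  0 < eta < 1 -> 0 < s < 1 -> 0 <= k -> in_L1D eta (fun x => / (Rpower x s + k)).
Proof.
intros heta hs hk.
set (e0 := Rpower eta s).
assert (he0 : 0 < e0) by (unfold e0, Rpower; apply exp_pos).
exists (2 / e0). split; [apply Rdiv_lt_0_compat; lra|].
intros eps heps.
set (ep := Rmin (e0 / 2) (eps * e0 * e0 / 8)).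
assert (hep : 0 < ep).
{ unfold ep. apply Rmin_glb_lt; [lra|]. apply Rdiv_lt_0_compat; [|lra].
  apply Rmult_lt_0_compat; [apply Rmult_lt_0_compat|]; lra. }
assert (hep1 : ep <= e0 / 2) by apply Rmin_l.
assert (hep2 : ep <= eps * e0 * e0 / 8) by apply Rmin_r.
destruct (approx_xs s eta ep hs ltac:(lra) hep) as [q [N [hq [hS1 happ]]]].
set (qs := Rpower q s) in *. set (S1 := Sq s q 1) in *. set (M := S N).
assert (hqs : 1 < qs) by (apply qs_gt1; auto).
assert (hiq : 0 < / q) by (apply Rinv_0_lt_compat; lra).
assert (hiqs : 0 < / qs) by (apply Rinv_0_lt_compat; lra).
set (t := fun j : nat => if (j <? M)%nat then (/ q) ^ (M - j) else q ^ (j - M)).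
set (a := fun j : nat => if (j <? M)%nat then (/ qs) ^ (M - j) * (/ q) ^ (M - j) / S1
                          else qs ^ (j - M) * q ^ (j - M) / S1).
set (K := k + ep + sumR M (fun n => qs ^ n + (/ qs) ^ (S n)) / S1).
assert (ident : forall x, 0 <= x ->
  K - sumR (M + M) (fun j => a j / (x + t j)) = k + ep + Fq s q N x / S1).
{ intros x hx.
  rewrite sumR_split.
  rewrite (sumR_rev M (fun j => a j / (x + t j))).
  rewrite (sumR_ext M (fun n => a (M - 1 - n)%nat / (x + t (M - 1 - n)%nat))
    (fun n => (/ qs) ^ (S n) * (/ q) ^ (S n) / S1 / (x + (/ q) ^ (S n)))).
  2:{ intros n hn. unfold a, t.
      assert (E : (M - 1 - n <? M)%nat = true) by (apply Nat.ltb_lt; lia).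
      rewrite E. replace (M - (M - 1 - n))%nat with (S n) by lia. reflexivity. }
  rewrite (sumR_ext M (fun n => a (M + n)%nat / (x + t (M + n)%nat))
    (fun n => qs ^ n * q ^ n / S1 / (x + q ^ n))).
  2:{ intros n hn. unfold a, t.
      assert (E : (M + n <? M)%nat = false) by (apply Nat.ltb_ge; lia).
      rewrite E. replace (M + n - M)%nat with n by lia. reflexivity. }
  unfold Fq. rewrite sum_f_sumR. fold M. unfold K.
  rewrite (sumR_ext M (fun n => qs ^ n + (/ qs) ^ (S n))
    (fun n => S1 * ((/ qs) ^ (S n) * (/ q) ^ (S n) / S1 / (x + (/ q) ^ (S n)))
              + S1 * (qs ^ n * q ^ n / S1 / (x + q ^ n)) + Cq s q n x)).
  2:{ intros n hn. unfold Cq, Aq, Bq. fold qs.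
      assert (0 < q ^ n) by (apply pow_lt; lra).
      assert (0 < (/ q) ^ S n) by (apply pow_lt; lra).
      field. repeat split; lra. }
  rewrite !sumR_plus, !sumR_scal. field. lra. }
assert (hCq0 : forall n, Cq s q n 0 = 0).
{ intros n. unfold Cq, Aq, Bq. unfold Rdiv. rewrite !Rmult_0_r, !Rmult_0_l. ring. }
assert (ht0 : 0 < t 0%nat).
{ unfold t. simpl. apply Rmult_lt_0_compat; auto. apply pow_lt; auto. }
assert (htinc : forall i j, (i < j)%nat -> t i < t j).
{ intros i j hij. unfold t.
  destruct (i <? M)%nat eqn:Ei; destruct (j <? M)%nat eqn:Ej.
  - apply Nat.ltb_lt in Ei, Ej. apply pow_inv_lt; auto. lia.
  - apply Nat.ltb_lt in Ei. apply Nat.ltb_ge in Ej.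
    apply Rlt_le_trans with 1.
    + replace 1 with ((/ q) ^ 0) by reflexivity. apply pow_inv_lt; auto. lia.
    + apply pow_R1_Rle. lra.
  - apply Nat.ltb_ge in Ei. apply Nat.ltb_lt in Ej. lia.
  - apply Nat.ltb_ge in Ei, Ej. apply Rlt_pow; auto. lia. }
assert (hapos : forall i, 0 < a i).
{ intros i. unfold a. destruct (i <? M)%nat; apply Rdiv_lt_0_compat; auto;
  apply Rmult_lt_0_compat; apply pow_lt; lra. }
assert (hsum0 : 0 <= sumR M (fun n => qs ^ n + (/ qs) ^ (S n))).
{ apply sumR_ge0. intros j _. generalize (pow_lt qs j ltac:(lra)) (pow_lt (/ qs) (S j) hiqs). lra. }
assert (hK0 : 0 < K).
{ unfold K. assert (0 <= sumR M (fun n => qs ^ n + (/ qs) ^ (S n)) / S1) by (apply Rdiv_le_0_compat; lra). lra. }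
assert (hK : sumR (M + M) (fun j => a j / t j) < K).
{ assert (h0 := ident 0 ltac:(lra)).
  assert (HF : Fq s q N 0 = 0).
  { unfold Fq. rewrite sum_f_sumR. rewrite (sumR_ext _ _ (fun _ => 0)) by (intros; apply hCq0).
    clear. induction (S N); simpl; [ring|]. rewrite IHn. ring. }
  rewrite HF in h0.
  rewrite (sumR_ext _ (fun j => a j / (0 + t j)) (fun j => a j / t j)) in h0
    by (intros; rewrite Rplus_0_l; reflexivity).
  unfold Rdiv at 2 in h0. rewrite Rmult_0_l in h0. lra. }
destruct (PF (M + M)%nat t a K ht0 htinc hapos hK) as [lpf [hpos hid]].
assert (hfold : forall x, 0 <= x ->
  fold_right (fun p acc => fst p / (x + snd p) + acc) 0 lpf
   = / (k + ep + Fq s q N x / S1) - / K).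
{ intros x hx. rewrite <- (ident x hx), (hid x hx). ring. }
assert (hx_facts : forall x, eta <= x <= 1 ->
   e0 <= Rpower x s /\ Rpower x s <= 1 /\ Rabs (Fq s q N x / S1 - Rpower x s) <= ep).
{ intros x hx. split; [|split].
  - unfold e0. apply Rle_Rpower_l; lra.
  - replace 1 with (Rpower 1 s) by (unfold Rpower; rewrite ln_1, Rmult_0_r; apply exp_0).
    apply Rle_Rpower_l; lra.
  - apply happ; auto. }
assert (heta_h : / (k + ep + Fq s q N eta / S1) <= 2 / e0).
{ destruct (hx_facts eta ltac:(lra)) as [h1 [h2 h3]]. apply Rabs_le_between in h3.
  unfold Rdiv at 2. rewrite Rmult_comm, <- (Rinv_inv 2).
  rewrite <- Rinv_mult. apply Rinv_le_contravar. 
  apply Rmult_lt_0_compat; lra. lra. }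
assert (hKinv : / K <= 2 / e0).
{ assert (h := hfold eta ltac:(lra)).
  assert (0 <= fold_right (fun p acc => fst p / (eta + snd p) + acc) 0 lpf)
    by (apply fold_ge0; auto; lra). lra. }
set (b := 4 / (e0 * eps)).
assert (hb : 0 < b) by (unfold b; apply Rdiv_lt_0_compat; [lra|]; apply Rmult_lt_0_compat; lra).
exists ((/ K, b) :: rescale eta lpf).
split; [|split].
- intros p [<-|hp]; simpl; [auto|]. apply (params_rescale eta lpf hpos); auto.
- simpl. rewrite l1_rescale by (auto; lra).
  rewrite Rabs_pos_eq by (apply Rlt_le, Rinv_0_lt_compat; auto).
  assert (h := hfold eta ltac:(lra)). lra.
- intros x hx. simpl. rewrite comb_rescale by (auto; lra).
  rewrite hfold by lra.
  destruct (hx_facts x hx) as [h1 [h2 h3]]. apply Rabs_le_between in h3.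
  set (y := Rpower x s) in *. set (r := Fq s q N x / S1) in *.
  assert (E1 : Rabs (/ (y + k) - / (k + ep + r)) <= eps / 2).
  { replace (/ (y + k) - / (k + ep + r)) with ((ep + r - y) / ((y + k) * (k + ep + r)))
      by (field; split; lra).
    assert (hAB : e0 * (e0 / 2) <= (y + k) * (k + ep + r)) by (apply Rmult_le_compat; lra).
    rewrite Rabs_div by nra. rewrite (Rabs_pos_eq ((y + k) * (k + ep + r))) by nra.
    apply Rle_trans with (2 * ep / (e0 * (e0 / 2))).
    - unfold Rdiv. apply Rmult_le_compat.
      + apply Rabs_pos.
      + apply Rlt_le, Rinv_0_lt_compat; nra.
      + apply Rabs_le; lra.
      + apply Rinv_le_contravar; nra.
    - apply Rmult_le_reg_r with (e0 * (e0 / 2)); [nra|].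
      field_simplify; try lra. }
  assert (E2 : Rabs (/ K - / K * dict eta b x) <= eps / 2).
  { unfold dict.
    replace (/ K - / K * ((eta + b) / (x + b))) with (/ K * ((x - eta) / (x + b)))
      by (field; split; lra).
    assert (0 <= (x - eta) / (x + b) <= / b).
    { split. apply Rdiv_le_0_compat; lra.
      apply Rmult_le_reg_r with ((x + b) * b); [nra|]. field_simplify; try lra. nra. }
    assert (0 < / K) by (apply Rinv_0_lt_compat; auto).
    rewrite Rabs_pos_eq by nra.
    apply Rle_trans with (2 / e0 * / b).
    - apply Rmult_le_compat; lra.
    - unfold b. rewrite Rinv_div. apply Req_le. field. lra. }
  replace (/ (y + k) - (/ K * dict eta b x + (/ (k + ep + r) - / K)))
    with ((/ (y + k) - / (k + ep + r)) + (/ K - / K * dict eta b x)) by ring.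
  apply Rle_trans with (Rabs (/ (y + k) - / (k + ep + r)) + Rabs (/ K - / K * dict eta b x)).
  apply Rabs_triang. lra.
Qed.

From mathcomp Require Import all_boot all_order all_algebra.
From mathcomp Require Import zify ring lra.
From mathcomp Require Import Rstruct.
Import Order.TTheory GRing.Theory Num.Theory.
Local Open Scope ring_scope.
Lemma size_index_enum_ord m : size (index_enum 'I_m) = m.
Proof. by rewrite -[RHS]card_ord cardE enumT [index_enum _]unlock. Qed.
Section S. Variable R : rcfType.
Lemma zero_roots m (p : {poly R}) (r : 'I_m -> R) :
  leq (size p) m -> injective r -> (forall k, root p (r k)) -> p = 0.
Proof.
move=> sp ir rt; apply/eqP; apply: contraT => p0.
have := max_poly_roots p0 (rs := [seq r k | k <- enum 'I_m]).
rewrite size_map size_enum_ord.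
have -> : all (root p) [seq r k | k <- enum 'I_m].
  by apply/allP => y /mapP [k _ ->].
rewrite map_inj_uniq ?enum_uniq // => /(_ isT isT) H.
by move: (leq_trans H sp); rewrite ltnn.
Qed.

Lemma size_prodX m (c : 'I_m -> R) :
  size (\prod_(l < m) ('X - (c l)%:P)) = m.+1.
Proof. by rewrite size_prod_XsubC size_index_enum_ord. Qed.

Lemma size_prodX1 m (c : 'I_m -> R) i :
  leq (size (\prod_(l < m | l != i) ('X - (c l)%:P))) m.
Proof.
rewrite -big_filter size_prod_XsubC size_filter.
have h1 := count_predC (pred1 i) (index_enum 'I_m).
have h2 := count_uniq_mem i (index_enum_uniq 'I_m).
rewrite mem_index_enum size_index_enum_ord in h1 h2.
rewrite -[X in (_ < X)%N]h1 h2 add1n ltnS; apply: eq_leq; apply: eq_count => l /=. by [].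
Qed.

Lemma horner_prodX m (c : 'I_m -> R) P x :
  (\prod_(l < m | P l) ('X - (c l)%:P)).[x] = \prod_(l < m | P l) (x - c l).
Proof. by rewrite horner_prod; apply: eq_bigr => l _; rewrite hornerXsubC. Qed.

Lemma size_leD (p q : {poly R}) n : leq (size p) n -> leq (size q) n -> leq (size (p + q)) n.
Proof. by move=> hp hq; apply: leq_trans (size_polyD p q) _; rewrite geq_max hp hq. Qed.
Lemma size_leN (p : {poly R}) n : leq (size p) n -> leq (size (- p)) n.
Proof. by rewrite size_polyN. Qed.
Lemma size_leZ (p : {poly R}) c n : leq (size p) n -> leq (size (c *: p)) n.
Proof. by move=> h; apply: leq_trans (size_scale_leq _ _) h. Qed.
Lemma size_leS m' (F : 'I_m' -> {poly R}) n : (forall i, leq (size (F i)) n) ->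
  leq (size (\sum_(i < m') F i)) n.
Proof.
move=> h; elim/big_ind: _ => //; first by rewrite size_poly0.
by move=> p q; apply: size_leD.
Qed.
Lemma size_sub_monic m (c d : 'I_m -> R) :
  leq (size (\prod_(l < m) ('X - (c l)%:P) - \prod_(l < m) ('X - (d l)%:P))) m.
Proof.
apply/leq_sizeP => j jm; rewrite coefB.
have mc := monic_prod_XsubC (index_enum 'I_m) xpredT c.
have md := monic_prod_XsubC (index_enum 'I_m) xpredT d.
have sc := size_prodX _ c; have sd := size_prodX _ d.
move: jm; rewrite leq_eqVlt => /orP[/eqP <-|jm].
  move/monicP: mc; move/monicP: md; rewrite /lead_coef sc sd /= => -> ->.
  by rewrite subrr.
by rewrite !nth_default ?subrr // ?sc ?sd.
Qed.

Lemma ivt2 (p : {poly R}) lo hi : lo <= hi -> p.[lo] * p.[hi] < 0 ->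
  exists2 x, lo < x < hi & root p x.
Proof.
move=> lh neg.
have key : forall q : {poly R}, q.[lo] < 0 -> 0 < q.[hi] ->
    exists2 x, lo < x < hi & root q x.
  move=> q ql qh.
  have := @poly_ivt R q lo hi lh.
  rewrite (ltW ql) (ltW qh) => /(_ isT) [x /andP[x1 x2] rx].
  exists x => //; move/eqP: rx => rx; apply/andP; split.
    rewrite lt_neqAle x1 andbT; apply/eqP => ex; move: ql; by rewrite ex rx ltxx.
  rewrite lt_neqAle x2 andbT; apply/eqP => ex; move: qh; by rewrite -ex rx ltxx.
have [pl|pl|pl] := ltgtP p.[lo] 0.
- apply: key => //; move: neg; by rewrite nmulr_rlt0.
- have pr : p.[hi] < 0 by move: neg; rewrite pmulr_rlt0.
  have [x xi rx] := key (- p) ltac:(by rewrite hornerN oppr_lt0)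
     ltac:(by rewrite hornerN oppr_gt0).
  by exists x => //; move: rx; rewrite rootN.
- by move: neg; rewrite pl mul0r ltxx.
Qed.

Section PF.
Variables (m : nat) (t a : nat -> R) (K : R).
Hypotheses (t0 : 0 < t 0) (tinc : forall i j, (i < j)%N -> t i < t j)
  (apos : forall i, 0 < a i) (Kbig : \sum_(j < m) a j / t j < K).

Lemma tle i j : (i <= j)%N -> t i <= t j.
Proof. rewrite leq_eqVlt => /orP[/eqP->//|/(tinc _ _)/ltW//]. Qed.
Lemma tpos i : 0 < t i.
Proof. by case: i => [//|i]; exact: lt_trans t0 (tinc _ _ (ltn0Sn i)). Qed.
Lemma Kpos : 0 < K.
Proof.
apply: le_lt_trans Kbig; apply: sumr_ge0 => j _.
by rewrite divr_ge0 // ltW // ?apos ?tpos.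
Qed.

Let Q := \prod_(j < m) ('X - (- t j)%:P).
Let L (j : 'I_m) := \prod_(l < m | l != j) ('X - (- t l)%:P).
Let N := K *: Q - \sum_(j < m) a j *: L j.

Lemma Q_eval x : Q.[x] = \prod_(l < m) (x + t l).
Proof. by rewrite horner_prodX; apply: eq_bigr => l _; rewrite opprK. Qed.
Lemma L_eval j x : (L j).[x] = \prod_(l < m | l != j) (x + t l).
Proof. by rewrite horner_prodX; apply: eq_bigr => l _; rewrite opprK. Qed.
Lemma QL x (j : 'I_m) : Q.[x] = (x + t j) * (L j).[x].
Proof. by rewrite Q_eval L_eval (bigD1 j). Qed.

Lemma N_horner x : N.[x] = K * Q.[x] - \sum_(j < m) a j * (L j).[x].
Proof.
rewrite /N hornerD hornerN hornerZ horner_sum; congr (_ - _).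
by apply: eq_bigr => j _; rewrite hornerZ.
Qed.

Lemma N_eval x : (forall j : 'I_m, x + t j != 0) ->
  N.[x] = Q.[x] * (K - \sum_(j < m) a j / (x + t j)).
Proof.
move=> nz; rewrite N_horner mulrBr mulr_sumr mulrC; congr (_ - _).
apply: eq_bigr => j _; rewrite (QL x j).
by field; rewrite nz.
Qed.

Let Pr (i : 'I_m) := \prod_(l < m | l != i) (t l - t i).

Lemma N_at_t (i : 'I_m) : N.[- t i] = - (a i * Pr i).
Proof.
rewrite N_horner (QL _ i) addNr mul0r mulr0 sub0r; congr (- _).
rewrite (bigD1 i) //= big1 ?addr0.
  by rewrite L_eval /Pr; congr (_ * _); apply: eq_bigr => l _; rewrite addrC.
move=> j ji; rewrite L_eval (bigD1 i) /=; last by rewrite eq_sym.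
by rewrite addNr mul0r mulr0.
Qed.

Lemma N_at_0 : 0 < N.[0].
Proof.
rewrite N_eval; last by move=> j; rewrite add0r gt_eqF // tpos.
apply: mulr_gt0; first by rewrite Q_eval; apply: prodr_gt0 => l _; rewrite add0r tpos.
rewrite subr_gt0; apply: le_lt_trans Kbig; rewrite le_eqVlt; apply/orP; left; apply/eqP; apply: eq_bigr => j _.
by rewrite add0r.
Qed.

Lemma ord_neq (l i : 'I_m) : l != i -> nat_of_ord l <> nat_of_ord i.
Proof. by move=> /eqP li e; apply: li; apply: val_inj. Qed.

Lemma Pr0 (i : 'I_m) : nat_of_ord i = 0%N -> 0 < Pr i.
Proof.
move=> i0; apply: prodr_gt0 => l /ord_neq li; rewrite subr_gt0; apply: tinc.
lia.
Qed.

Lemma Pr_step (i j : 'I_m) : nat_of_ord j = (nat_of_ord i).+1 -> Pr i * Pr j < 0.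
Proof.
move=> ji.
have jni : j != i by apply/eqP => e; move: ji; rewrite e; lia.
rewrite /Pr (bigD1 j) //= [X in _ * X](bigD1 i) /=; last by rewrite eq_sym.
set A := \prod_(l < m | _) (t l - t i).
set B := \prod_(l < m | _) (t l - t j).
have AB : 0 < A * B.
  rewrite /A /B [X in _ * X](eq_bigl (fun l => (l != i) && (l != j))); last by move=> l; rewrite andbC.
  rewrite -big_split /=; apply: prodr_gt0 => l /andP[/ord_neq li /ord_neq lj].
  have [lt|gt] : (nat_of_ord l < nat_of_ord i)%N \/ (nat_of_ord j < nat_of_ord l)%N by lia.
    rewrite -mulrNN !opprB; apply: mulr_gt0; rewrite subr_gt0; apply: tinc; lia.
  apply: mulr_gt0; rewrite subr_gt0; apply: tinc; lia.
have tij : t i < t j by apply: tinc; lia.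
have -> : (t j - t i) * A * ((t i - t j) * B) = - ((t j - t i) ^+ 2) * (A * B) by ring.
rewrite pmulr_llt0 // oppr_lt0 exprn_gt0 // subr_gt0 //.
Qed.


Let lo (i : 'I_m) := - t i.
Let hi (i : 'I_m) := if nat_of_ord i is k.+1 then - t k else 0.

Lemma root_ex (i : 'I_m) : exists r, (lo i < r < hi i) /\ root N r.
Proof.
suff [r ri rr] : exists2 r, lo i < r < hi i & root N r by exists r.
apply: ivt2.
  rewrite /lo /hi; case ei: (nat_of_ord i) => [|k].
    by rewrite oppr_le0 ltW // tpos.
  by rewrite lerN2 ltW // tinc.
rewrite /lo N_at_t /hi.
have [ei|[k ei]] : nat_of_ord i = 0%N \/ exists k, nat_of_ord i = k.+1.
  by case: (nat_of_ord i) => [|k]; [left|right; exists k].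
  rewrite ei pmulr_llt0 ?N_at_0 // oppr_lt0; apply: mulr_gt0 => //.
  exact: Pr0.
rewrite ei.
have km : (k < m)%N by move: (ltn_ord i); rewrite ei; lia.
have := N_at_t (Ordinal km); rewrite /= => ->.
rewrite mulrNN.
have -> : a k.+1 * Pr i * (a k * Pr (Ordinal km)) = (a k.+1 * a k) * (Pr (Ordinal km) * Pr i) by ring.
rewrite pmulr_rlt0 ?mulr_gt0 //; apply: Pr_step; by rewrite /= ei.
Qed.

Section Roots.
Variable r : 'I_m -> R.
Hypothesis hr : forall i, (lo i < r i < hi i) /\ root N (r i).

Lemma r_lo (i : 'I_m) : - t i < r i. Proof. by case: (hr i) => /andP[]. Qed.
Lemma r_hi {i j : 'I_m} : (nat_of_ord i < nat_of_ord j)%N -> r j < - t i.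
Proof.
move=> ij; case: (hr j) => /andP[_]; rewrite /hi; case ej: (nat_of_ord j) => [|k].
  by move: ij; rewrite ej.
move=> h _; apply: (lt_le_trans h); rewrite lerN2; apply: tle; lia.
Qed.
Lemma r_neg (i : 'I_m) : r i < 0.
Proof.
case: (hr i) => /andP[_]; rewrite /hi; case: (nat_of_ord i) => [//|k] h _.
by apply: lt_trans h _; rewrite oppr_lt0 tpos.
Qed.
Lemma r_dec {i j : 'I_m} : (nat_of_ord i < nat_of_ord j)%N -> r j < r i.
Proof. move=> ij; apply: lt_trans (r_hi ij) (r_lo i). Qed.
Lemma r_inj : injective r.
Proof.
move=> i j e; apply: val_inj; case: (ltngtP (nat_of_ord i) (nat_of_ord j)) => // h.
  by move: (r_dec h); rewrite e ltxx.
by move: (r_dec h); rewrite e ltxx.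
Qed.
Lemma fac_pos (i l : 'I_m) : l != i -> 0 < (r i + t l) * (r i - r l).
Proof.
move=> /ord_neq li.
have [lt|gt] : (nat_of_ord l < nat_of_ord i)%N \/ (nat_of_ord i < nat_of_ord l)%N by lia.
  rewrite -mulrNN; apply: mulr_gt0.
    by rewrite oppr_gt0 -ltrBrDr sub0r r_hi.
  by rewrite opprB subr_gt0 r_dec.
apply: mulr_gt0; last by rewrite subr_gt0 r_dec.
rewrite -ltrBlDr sub0r; apply: le_lt_trans (r_lo i); rewrite lerN2; apply: tle; lia.
Qed.

Let U := \prod_(l < m) ('X - (r l)%:P).
Let V (i : 'I_m) := \prod_(l < m | l != i) ('X - (r l)%:P).

Lemma U_root (k : 'I_m) : U.[r k] = 0.
Proof. by rewrite horner_prodX (bigD1 k) //= subrr mul0r. Qed.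
Lemma V_root (i k : 'I_m) : i != k -> (V i).[r k] = 0.
Proof. by move=> ik; rewrite horner_prodX (bigD1 k) //= ?subrr ?mul0r // eq_sym. Qed.
Lemma UV x (i : 'I_m) : U.[x] = (x - r i) * (V i).[x].
Proof. by rewrite !horner_prodX (bigD1 i). Qed.
Lemma V_nz (i : 'I_m) : (V i).[r i] != 0.
Proof.
rewrite horner_prodX; apply/prodf_neq0 => l li; rewrite subr_eq0; apply/eqP => e.
by move: li; rewrite (r_inj _ _ e) eqxx.
Qed.

Lemma N_KU : N = K *: U.
Proof.
apply/eqP; rewrite -subr_eq0; apply/eqP; apply: (@zero_roots m _ r); last first.
- move=> k; rewrite /root hornerD hornerN hornerZ U_root mulr0 subr0.
  by case: (hr k).
- exact: r_inj.
rewrite /N addrAC -scalerBr; apply: size_leD.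
  by apply: size_leZ; apply: size_sub_monic.
by apply: size_leN; apply: size_leS => j; apply: size_leZ; apply: size_prodX1.
Qed.

Let g (i : 'I_m) := Q.[r i] / (V i).[r i].

Lemma Lagr : Q = U + \sum_(i < m) g i *: V i.
Proof.
apply/eqP; rewrite -subr_eq0 opprD addrA; apply/eqP.
apply: (@zero_roots m _ r); last first.
- move=> k; rewrite /root !(hornerD, hornerN) U_root subr0 horner_sum.
  rewrite (bigD1 k) //= big1 ?addr0; last first.
    by move=> i ik; rewrite hornerZ V_root ?mulr0.
  by rewrite hornerZ /g divfK ?subrr ?V_nz.
- exact: r_inj.
apply: size_leD; first by apply: size_sub_monic.
by apply: size_leN; apply: size_leS => j; apply: size_leZ; apply: size_prodX1.
Qed.

Lemma g_pos (i : 'I_m) : 0 < g i.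
Proof.
have QV : 0 < Q.[r i] * (V i).[r i].
  rewrite Q_eval horner_prodX (bigD1 i) //= -mulrA -big_split /=.
  apply: mulr_gt0; first by rewrite -ltrBlDr sub0r r_lo.
  apply: prodr_gt0 => l li; exact: fac_pos.
rewrite /g; have [vp|vn|v0] := ltgtP (V i).[r i] 0.
- have Qn : Q.[r i] < 0 by move: QV; rewrite nmulr_lgt0.
  by rewrite nmulr_rgt0 // invr_lt0.
- have Qp : 0 < Q.[r i] by move: QV; rewrite pmulr_lgt0.
  by rewrite divr_gt0.
- by move: QV; rewrite v0 mulr0 ltxx.
Qed.

Lemma pf_roots : exists l : seq (R * R),
  (forall p, p \in l -> 0 <= p.1 /\ 0 < p.2) /\
  forall x, 0 <= x ->
    (K - \sum_(j < m) a j / (x + t j))^-1 = K^-1 + \sum_(p <- l) p.1 / (x + p.2).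
Proof.
exists [seq (g i / K, - r i) | i <- index_enum 'I_m]; split.
  move=> p /mapP [i _ ->] /=; split.
    by rewrite divr_ge0 // ltW // ?g_pos ?Kpos.
  by rewrite oppr_gt0 r_neg.
move=> x x0; rewrite big_map /=.
have xt j : 0 < x + t j by rewrite ltr_wpDl // tpos.
have xr j : 0 < x - r j by rewrite subr_gt0; exact: lt_le_trans (r_neg j) x0.
have Ux : 0 < U.[x] by rewrite horner_prodX; apply: prodr_gt0 => l _; apply: xr.
have Qx : 0 < Q.[x] by rewrite Q_eval; apply: prodr_gt0 => l _; apply: xt.
have Vx i : 0 < (V i).[x] by rewrite horner_prodX; apply: prodr_gt0 => l _; apply: xr.
have Kp := Kpos.
have -> : K - \sum_(j < m) a j / (x + t j) = K * U.[x] / Q.[x].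
  have := @N_eval x (fun j => lt0r_neq0 (xt j)).
  rewrite N_KU hornerZ => ->; field; exact: lt0r_neq0.
rewrite invf_div {1}Lagr hornerD horner_sum mulrDl mulr_suml; congr (_ + _).
  by field; rewrite ?lt0r_neq0.
apply: eq_bigr => i _; rewrite hornerZ (UV x i); field.
by rewrite ?lt0r_neq0 ?Vx ?xr.
Qed.
End Roots.

Theorem pf_main : exists l : seq (R * R),
  (forall p, p \in l -> 0 <= p.1 /\ 0 < p.2) /\
  forall x, 0 <= x ->
    (K - \sum_(j < m) a j / (x + t j))^-1 = K^-1 + \sum_(p <- l) p.1 / (x + p.2).
Proof. have [r hr] := fin_all_exists root_ex; exact: pf_roots r hr. Qed.

End PF.
End S.

Lemma sumR_big m f : sumR m f = (\sum_(j < m) f j)%R.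
Proof. elim: m => [|m IH]; first by rewrite big_ord0. by rewrite big_ord_recr /= IH. Qed.

Lemma fold_big l x : fold_right (fun p acc => Rplus (Rdiv (fst p) (Rplus x (snd p))) acc) 0%R l
  = (\sum_(p <- l) p.1 / (x + p.2))%R.
Proof. elim: l => [|p l IH]; first by rewrite big_nil. by rewrite big_cons /= IH. Qed.

Lemma In_mem (p : R * R) l : In p l -> p \in l.
Proof.
elim: l => //= q l IH [->|h]; first by rewrite in_cons eqxx.
by rewrite in_cons IH ?orbT.
Qed.

Lemma PF_holds : PF_stmt.
Proof.
move=> m t a K t0 tinc apos Ksum.
have ltR : forall x y : R, Rlt x y -> (x < y)%R by move=> x y /RltP.
have [l [hl hid]] := @pf_main R m t a K (ltR _ _ t0)
  (fun i j h => ltR _ _ (tinc i j (elimT ssrnat.ltP h)))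
  (fun i => ltR _ _ (apos i))
  (ltR _ _ (eq_ind _ (fun z => Rlt z K) Ksum _ (sumR_big _ _))).
exists l; split.
  move=> p /In_mem /hl [h1 h2]; split; [exact/RleP|exact/RltP].
move=> x /RleP x0.
rewrite fold_big sumR_big.
exact: hid x x0.
Qed.

Local Close Scope ring_scope.
Open Scope R_scope.

Theorem corollary4p2 (eta s k : R) :
  0 < eta < 1 -> 0 < s < 1 -> 0 <= k ->
  in_L1D eta (fun x => / (Rpower x s + k)).
Proof. exact (main_from_PF PF_holds eta s k). Qed.
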